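(* Let $\mathbf A$ be a finite algebra with a strongly abelian congruence $\alpha$ and let $a,b\in A$ with $(a,b)\in\alpha$. Then $|F_{\mathbf A,ab}(n)|\in O(n^k)$ where $k=\lfloor\log_2|A|\rfloor$.
   Context: $\mathrm{Clo}_n(\mathbf A)$ is the set of $n$-ary term operations of $\mathbf A$, and $F_{\mathbf A,ab}(n)=\{t|_{\{a,b\}^n}\colon\{a,b\}^n\to A\mid t\in\mathrm{Clo}_n(\mathbf A)\}$. A congruence $\alpha$ of $\mathbf A$ is strongly abelian if for every $k\ge1$, every $t\in\mathrm{Clo}_k(\mathbf A)$ and all $x_1,\dots,x_k,y_1,\dots,y_k,z_2,\dots,z_k\in A$ with $(x_i,y_i)\in\alpha$ for $1\le i\le k$ and $(y_i,z_i)\in\alpha$ for $2\le i\le k$, $t(x_1,\dots,x_k)=t(y_1,\dots,y_k)$ implies $t(x_1,z_2,\dots,z_k)=t(y_1,z_2,\dots,z_k)$. *)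

(* Defs.v *)
From Stdlib Require Import ClassicalEpsilon.
From HB Require Import structures.
From mathcomp Require Import all_boot.
Set Implicit Arguments. Unset Strict Implicit. Unset Printing Implicit Defensive.

(* An algebra: carrier T, operation symbols I, arity ar, interpretation ops. *)

Inductive term (I : Type) (ar : I -> nat) (n : nat) : Type :=
| Var of 'I_n
| App (o : I) of ('I_(ar o) -> term ar n).

Fixpoint eval_term (T I : Type) (ar : I -> nat)
    (ops : forall o : I, ('I_(ar o) -> T) -> T) (n : nat)
    (t : term ar n) (x : 'I_n -> T) : T :=
  match t with
  | Var i => x i
  | App o f => ops o (fun j => eval_term ops (f j) x)
  end.

Definition Clo (T I : Type) (ar : I -> nat)
    (ops : forall o : I, ('I_(ar o) -> T) -> T) (n : nat) (f : ('I_n -> T) -> T) : Prop :=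
  exists t : term ar n, forall x, f x = eval_term ops t x.

Definition is_congruence (T : finType) (I : Type) (ar : I -> nat)
    (ops : forall o : I, ('I_(ar o) -> T) -> T) (alpha : rel T) : Prop :=
  [/\ reflexive alpha, symmetric alpha, transitive alpha &
      forall (o : I) (x y : 'I_(ar o) -> T),
        (forall j, alpha (x j) (y j)) -> alpha (ops o x) (ops o y)].

Definition strongly_abelian (T : finType) (I : Type) (ar : I -> nat)
    (ops : forall o : I, ('I_(ar o) -> T) -> T) (alpha : rel T) : Prop :=
  forall (k : nat) (t : ('I_k.+1 -> T) -> T), Clo ops t ->
  forall x y z : 'I_k.+1 -> T,
    (forall i, alpha (x i) (y i)) ->
    (forall i, i != ord0 -> alpha (y i) (z i)) ->
    t x = t y ->
    t (fun i => if i == ord0 then x ord0 else z i) =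
    t (fun i => if i == ord0 then y ord0 else z i).

Definition asb (P : Prop) : bool :=
  if excluded_middle_informative P then true else false.

(* A tuple in {a,b}^n is encoded by s : 'I_n -> bool (false ↦ a, true ↦ b);
   when a = b this encoding identifies restrictions exactly as {a,b}^n does. *)
Definition F_ab (T : finType) (I : Type) (ar : I -> nat)
    (ops : forall o : I, ('I_(ar o) -> T) -> T) (a b : T) (n : nat)
    : {set {ffun {ffun 'I_n -> bool} -> T}} :=
  [set g | asb (exists t : ('I_n -> T) -> T,
                  Clo ops t /\ g = [ffun s : {ffun 'I_n -> bool} => t (fun i => if s i then b else a)])].

(* Main.v *)
Require Import Defs.
From mathcomp Require Import all_boot.
From Stdlib Require Import FunctionalExtensionality ClassicalEpsilon.
Set Implicit Arguments. Unset Strict Implicit. Unset Printing Implicit Defensive.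

Section S.
Variables (T : finType) (I : Type) (ar : I -> nat)
    (ops : forall o : I, ('I_(ar o) -> T) -> T) (alpha : rel T) (a b : T).
Hypotheses (Hc : is_congruence ops alpha) (Hs : strongly_abelian ops alpha) (Hab : alpha a b).

Fixpoint rename n m (f : 'I_n -> 'I_m) (t : term ar n) : term ar m :=
  match t with
  | Var i => Var ar (f i)
  | App o g => App (fun j => rename f (g j))
  end.

Lemma eval_rename n m (f : 'I_n -> 'I_m) t x :
  eval_term ops (rename f t) x = eval_term ops t (x \o f).
Proof.
elim: t => [i|o g IH] //=; f_equal; apply: functional_extensionality => j; exact: IH.
Qed.

Lemma Clo_rename n m (f : 'I_n -> 'I_m) t : Clo ops t -> Clo ops (fun w => t (w \o f)).
Proof. by case=> tm Htm; exists (rename f tm) => x; rewrite eval_rename Htm. Qed.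

Lemma sa_at n (t : ('I_n -> T) -> T) : Clo ops t -> forall i (x y z : 'I_n -> T),
  (forall j, alpha (x j) (y j)) -> (forall j, j != i -> alpha (y j) (z j)) -> t x = t y ->
  t (fun j => if j == i then x i else z j) = t (fun j => if j == i then y i else z j).
Proof.
case: n t => [|n] t Ct i; first by case: i.
move=> x y z Hxy Hyz Ht.
pose s := fun j : 'I_n.+1 => if j == ord0 then i else if j == i then ord0 else j.
have sK : forall j, s (s j) = j.
  move=> j; rewrite /s; case: (eqVneq j ord0) => [->|h0].
    by rewrite eqxx; case: (eqVneq i ord0) => [->|hi] //; rewrite eqxx.
  case: (eqVneq j i) => [->|hi]; first by rewrite eqxx.
  by rewrite (negbTE h0) (negbTE hi).
have si : s ord0 = i by rewrite /s eqxx.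
have Ct' := Clo_rename s Ct.
have E : forall w : 'I_n.+1 -> T, (w \o s) \o s = w.
  by move=> w; apply: functional_extensionality => j /=; rewrite sK.
have H2 : forall j : 'I_n.+1, j != ord0 -> alpha ((y \o s) j) ((z \o s) j).
  move=> j hj; apply: Hyz; apply: contra hj => /eqP hj'.
  by rewrite -(sK j) hj' -si sK.
have H1 : forall j : 'I_n.+1, alpha ((x \o s) j) ((y \o s) j) by move=> j; apply: Hxy.
have H3 : (fun w => t (w \o s)) (x \o s) = (fun w => t (w \o s)) (y \o s) by rewrite /= !E.
pose proof (@Hs _ _ Ct' _ _ _ H1 H2 H3) as H.
have F : forall v : T, (fun j => if j == i then v else z j) = (fun j => if j == ord0 then v else (z \o s) j) \o s.
  move=> v; apply: functional_extensionality => j /=.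
  case: (eqVneq j i) => [->|hj].
    have -> : s i = ord0 by rewrite -{1}si sK.
    by rewrite eqxx.
  have -> : (s j == ord0) = false.
    by apply/negbTE; apply: contra hj => /eqP hj'; rewrite -(sK j) hj' si.
  by rewrite sK.
by rewrite !F; move: H => /=; rewrite si.
Qed.

Definition enc n (s : {ffun 'I_n -> bool}) : 'I_n -> T := fun i => if s i then b else a.
Definition flip n (s : {ffun 'I_n -> bool}) (i : 'I_n) : {ffun 'I_n -> bool} :=
  [ffun j => if j == i then ~~ s i else s j].
Definition Ess n (t : ('I_n -> T) -> T) : {set 'I_n} :=
  [set i | [exists s, t (enc s) != t (enc (flip s i))]].

Lemma alpha_enc n (s s' : {ffun 'I_n -> bool}) j : alpha (enc s j) (enc s' j).
Proof.
case: Hc => Hr Hsym _ _.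
by rewrite /enc; case: (s j); case: (s' j) => //; rewrite ?Hr // Hsym.
Qed.

Lemma fact2 n (t : ('I_n -> T) -> T) : Clo ops t -> forall i (s s' : {ffun 'I_n -> bool}), i \in Ess t ->
  s i != s' i -> t (enc s) != t (enc s').
Proof.
move=> Ct i s s'; rewrite inE => /existsP [s0 Hs0] Hne; apply/negP => /eqP Heq.
have := sa_at Ct (z := enc s0) (fun j => alpha_enc s s' j) (fun j _ => alpha_enc s' s0 j) Heq.
have K : forall w : {ffun 'I_n -> bool},
    (fun j => if j == i then enc w i else enc s0 j) = enc (if w i == s0 i then s0 else flip s0 i).
  move=> w; apply: functional_extensionality => j; rewrite /enc.
  case: (eqVneq j i) => [->|hj].
    case: (eqVneq (w i) (s0 i)) => [->|hv] //; rewrite /flip ffunE eqxx.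
    by move: hv; case: (w i); case: (s0 i).
  by case: (w i == s0 i) => //; rewrite /flip ffunE (negbTE hj).
move/(_ i); rewrite !K; move: Hne Hs0.
by case: (s i); case: (s' i); case: (s0 i) => //= _ /negP H1 H2; apply: H1; apply/eqP.
Qed.

Lemma dummy0 : True. Proof. by []. Qed.
Lemma fact1 n (t : ('I_n -> T) -> T) (s s' : {ffun 'I_n -> bool}) :
  (forall i, i \in Ess t -> s i = s' i) -> t (enc s) = t (enc s').
Proof.
move=> Hag.
pose sm m := [ffun i : 'I_n => if i < m then s' i else s i].
have step : forall m, t (enc (sm m)) = t (enc (sm m.+1)).
  move=> m; case: (ltnP m n) => hm; last first.
    congr (t (enc _)); apply/ffunP => i; rewrite !ffunE.
    have hi := ltn_ord i.
    by rewrite (leq_trans hi hm) (leq_trans hi (leqW hm)).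
  pose im : 'I_n := Ordinal hm.
  have Hi : forall i : 'I_n, (i < m.+1) = (i == im) || (i < m).
    by move=> i; rewrite ltnS leq_eqVlt.
  case: (eqVneq (s im) (s' im)) => [he|hne].
    congr (t (enc _)); apply/ffunP => i; rewrite !ffunE Hi.
    by case: (eqVneq i im) => [->|hi] //=; rewrite ltnn he.
  have nE : im \notin Ess t by apply: contra hne => /Hag ->.
  move: nE; rewrite inE negb_exists => /forallP /(_ (sm m)); rewrite negbK => /eqP ->.
  congr (t (enc _)); apply/ffunP => i; rewrite /flip !ffunE Hi.
  case: (eqVneq i im) => [->|hi] //=.
  by rewrite ltnn; move: hne; case: (s im); case: (s' im).
have all : forall m, t (enc (sm 0)) = t (enc (sm m)).
  by elim=> [//|m IH]; rewrite IH step.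
have -> : s = sm 0 by apply/ffunP => i; rewrite ffunE.
have -> : s' = sm n by apply/ffunP => i; rewrite ffunE ltn_ord.
exact: all.
Qed.

Lemma fact3 n (t : ('I_n -> T) -> T) : Clo ops t -> #|Ess t| <= trunc_log 2 #|T|.
Proof.
move=> Ct; apply: trunc_log_max => //.
pose ind (S : {set 'I_n}) : {ffun 'I_n -> bool} := [ffun i => i \in S].
pose f S := t (enc (ind S)).
rewrite -card_powerset -(@card_in_imset _ _ f); first exact: max_card.
move=> S S'; rewrite !inE => hS hS' Hf; apply/setP => i.
case: (eqVneq (i \in S) (i \in S')) => // hne; exfalso.
have iE : i \in Ess t.
  move: hne; case hi: (i \in S) => /= h.
    exact: (subsetP hS).
  by apply: (subsetP hS'); move: h; case: (i \in S').
have := fact2 Ct iE (s := ind S) (s' := ind S'); rewrite !ffunE => /(_ hne).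
by rewrite /f in Hf; rewrite Hf eqxx.
Qed.
End S.

Theorem proposition3p4 (T : finType) (I : Type) (ar : I -> nat)
    (ops : forall o : I, ('I_(ar o) -> T) -> T) (alpha : rel T)
    (a b : T) :
  is_congruence ops alpha -> strongly_abelian ops alpha -> alpha a b ->
  exists (C N : nat), forall n : nat, N <= n ->
    #|F_ab ops a b n| <= C * n ^ (trunc_log 2 #|T|).
Proof.
move=> Hc Hs Hab.
set k := trunc_log 2 #|T|.
exists (#|T| ^ 2 ^ k), 1; case=> [//|n] _.
pose Phi (p : {ffun 'I_k -> 'I_n.+1} * {ffun {ffun 'I_k -> bool} -> T}) :
  {ffun {ffun 'I_n.+1 -> bool} -> T} := [ffun s : {ffun 'I_n.+1 -> bool} => p.2 [ffun j => s (p.1 j)]].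
have sub : F_ab ops a b n.+1 \subset Phi @: setT.
  apply/subsetP => g; rewrite inE /asb; case: excluded_middle_informative => //= [[t [Ct ->]]] _.
  set E := Ess a b t.
  pose ids := [ffun j : 'I_k => nth ord0 (enum E) j].
  pose lift (u : {ffun 'I_k -> bool}) : {ffun 'I_n.+1 -> bool} :=
    [ffun i => if [pick j | ids j == i] is Some j then u j else false].
  pose h := [ffun u => t (enc a b (lift u))].
  apply/imsetP; exists (ids, h) => //; apply/ffunP => s; rewrite !ffunE.
  pose v : {ffun 'I_k -> bool} := [ffun j => s (ids j)].
  have hv : forall j, v j = s (ids j) by move=> j; rewrite /v ffunE.
  have := fact1 (a := a) (b := b) (t := t) (s := s) (s' := lift v).
  apply => i iE; rewrite ffunE.
  have hidx : index i (enum E) < k.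
    apply: leq_trans (fact3 Hc Hs Hab Ct).
    by rewrite cardE index_mem mem_enum.
  have hj : ids (Ordinal hidx) == i by rewrite ffunE /= nth_index ?mem_enum.
  case: pickP => [j /eqP hji|none].
    by rewrite -hji hv.
  by move: (none (Ordinal hidx)); rewrite hj.
apply: leq_trans (subset_leq_card sub) _.
apply: leq_trans (leq_imset_card _ _) _.
by rewrite cardsT card_prod !card_ffun !card_ord card_bool mulnC.
Qed.
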